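(* Let $X$ be a compact metric space and $f\colon X\to X$ continuous with $h_{\mathrm{top}}(f)<\infty$. If $\Phi,\Psi\in C(X)^d$ satisfy condition (Q), then $I_0(\Phi,\Psi)=\operatorname{int}I(\Phi,\Psi)$.
   Context: $\mathcal{M}^f(X)$ is the set of $f$-invariant Borel probability measures. $\Phi=(\varphi_1,\dots,\varphi_d)$, $\Psi=(\psi_1,\dots,\psi_d)$, $\alpha*\Psi=(\alpha_i\psi_i)_i$. Condition (Q): $\int\psi_i\,d\mu\ge0$ for every $\mu\in\mathcal{M}^f(X)$ and $1\le i\le d$, with strict inequality whenever $\int\varphi_i\,d\mu=0$. $I(\Phi,\Psi)=\left\{\left(\frac{\int\varphi_1d\mu}{\int\psi_1d\mu},\dots,\frac{\int\varphi_dd\mu}{\int\psi_dd\mu}\right)\mid\mu\in\mathcal{M}^f(X)\right\}$. For $\alpha\in\mathbb{R}^d$, $J(\Phi,\Psi,\alpha)=\{\int(\Phi-\alpha*\Psi)\,d\mu\mid\mu\in\mathcal{M}^f(X)\}\subset\mathbb{R}^d$, and $I_0(\Phi,\Psi)=\{\alpha\in\mathbb{R}^d\mid0\in\operatorname{int}J(\Phi,\Psi,\alpha)\}$. *)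

(* Defs.v *)
From HB Require Import structures.
From mathcomp Require Import all_boot all_order all_algebra.
From mathcomp Require Import all_classical all_reals all_analysis.
Set Implicit Arguments. Unset Strict Implicit. Unset Printing Implicit Defensive.
Import Order.TTheory GRing.Theory Num.Theory.
Import numFieldNormedType.Exports.
Local Open Scope classical_set_scope.
Local Open Scope ring_scope.

Definition Borel (X : ptopologicalType) := g_sigma_algebraType (@open X).

Section Dyn.
Variables (R : realType) (X : pseudoPMetricType R).

Definition separated (f : X -> X) (n : nat) (eps : R) (E : seq X) : Prop :=
  uniq E /\
  forall x y, x \in E -> y \in E -> x != y ->
    exists k, (k < n)%N /\ ~ ball (iter k f x) eps (iter k f y).

Definition sep_num (f : X -> X) (n : nat) (eps : R) : \bar R :=
  ereal_sup ((fun E : seq X => ((size E)%:R)%:E) @` [set E | separated f n eps E]).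

Definition sep_growth (f : X -> X) (eps : R) : \bar R :=
  limn_esup (fun n : nat => ((n.+1%:R)^-1)%:E * lne (sep_num f n.+1 eps))%E.

(* h_top(f) = lim_{eps -> 0} sep_growth f eps = sup_{eps > 0} sep_growth f eps
   (sep_growth f is nonincreasing in eps). *)
Definition htop (f : X -> X) : \bar R :=
  ereal_sup [set sep_growth f eps | eps in [set e : R | 0 < e]].

Definition invariant_prob (f : X -> X) (mu : probability (Borel X) R) : Prop :=
  forall A : set (Borel X), measurable A -> mu (f @^-1` A) = mu A.

Definition integ (mu : probability (Borel X) R) (g : X -> R) : R :=
  Rintegral mu setT g.

Definition condQ (f : X -> X) (d : nat) (Phi Psi : 'I_d -> X -> R) : Prop :=
  forall mu : probability (Borel X) R, invariant_prob f mu ->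
    forall i : 'I_d,
      0 <= integ mu (Psi i) /\
      (integ mu (Phi i) = 0 -> 0 < integ mu (Psi i)).

(* I(Phi,Psi), as a subset of R^d: the real vectors of ratios
   (\int phi_i dmu / \int psi_i dmu)_i, mu ranging over M^f(X)
   (only measures with all \int psi_i dmu <> 0 give a point of R^d). *)
Definition Iset (f : X -> X) (d : nat) (Phi Psi : 'I_d -> X -> R) : set 'rV[R]_d :=
  [set v | exists mu : probability (Borel X) R, invariant_prob f mu /\
     forall i : 'I_d, integ mu (Psi i) != 0 /\
                      v ord0 i = integ mu (Phi i) / integ mu (Psi i)].

Definition Jset (f : X -> X) (d : nat) (Phi Psi : 'I_d -> X -> R)
    (alpha : 'rV[R]_d) : set 'rV[R]_d :=
  [set v | exists mu : probability (Borel X) R, invariant_prob f mu /\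
     v = \row_(i < d) integ mu (fun x => Phi i x - alpha ord0 i * Psi i x)].

Definition I0set (f : X -> X) (d : nat) (Phi Psi : 'I_d -> X -> R) : set 'rV[R]_d :=
  [set alpha | (interior (Jset f Phi Psi alpha)) 0].

End Dyn.

(* Main.v *)
Require Import Defs.
From HB Require Import structures.
From mathcomp Require Import all_boot all_order all_algebra.
From mathcomp Require Import all_classical all_reals all_analysis measurable_realfun.
From mathcomp Require Import ring lra zify.
Set Implicit Arguments. Unset Strict Implicit. Unset Printing Implicit Defensive.
Import Order.TTheory GRing.Theory Num.Theory.
Import numFieldNormedType.Exports.
Local Open Scope classical_set_scope.
Local Open Scope ring_scope.

Section Mix.
Context d (T : measurableType d) (R : realType).
Variables (l : R) (l0 : 0 <= l) (l1 : l <= 1) (mu nu : probability T R).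

Definition lnn : {nonneg R} := NngNum l0.
Let l0' : 0 <= 1 - l. Proof. by rewrite subr_ge0. Qed.
Definition lnn' : {nonneg R} := NngNum l0'.

Definition mix := measure_add (mscale lnn mu) (mscale lnn' nu).

Lemma mixE A : mix A = (l%:E * mu A + (1 - l)%:E * nu A)%E.
Proof. by rewrite /mix measure_addE. Qed.

HB.instance Definition _ := Measure.on mix.

Let mix1 : mix [set: T] = 1%E.
Proof. by rewrite mixE !probability_setT !mule1 -EFinD subrKC. Qed.

HB.instance Definition _ := Measure_isProbability.Build _ _ _ mix mix1.

Definition mixp : probability T R := mix.

Lemma mixpE A : mixp A = (l%:E * mu A + (1 - l)%:E * nu A)%E.
Proof. exact: mixE. Qed.

Lemma mix_integral (g : T -> R) : measurable_fun setT g ->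
  mu.-integrable setT (EFin \o g) -> nu.-integrable setT (EFin \o g) ->
  Rintegral mixp setT g = l * Rintegral mu setT g + (1 - l) * Rintegral nu setT g.
Proof.
move=> mg imu inu.
have mf : measurable_fun [set: T] (fun x => (g x)%:E).
  exact/measurable_EFinP.
rewrite /Rintegral integralE [X in _ = l * fine X + _]integralE [X in _ = _ + _ * fine X]integralE.
have hp : forall m1 m2 : {measure set T -> \bar R},
  (\int[measure_add m1 m2]_(x in setT) (fun x => (g x)%:E)^\+ x =
   \int[m1]_(x in setT) (fun x => (g x)%:E)^\+ x + \int[m2]_(x in setT) (fun x => (g x)%:E)^\+ x)%E.
  move=> m1 m2; apply: ge0_integral_measure_add => //; exact: measurable_funepos.
have hn : forall m1 m2 : {measure set T -> \bar R},
  (\int[measure_add m1 m2]_(x in setT) (fun x => (g x)%:E)^\- x =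
   \int[m1]_(x in setT) (fun x => (g x)%:E)^\- x + \int[m2]_(x in setT) (fun x => (g x)%:E)^\- x)%E.
  move=> m1 m2; apply: ge0_integral_measure_add => //; exact: measurable_funeneg.
have e1 : (\int[mixp]_(x in setT) (fun x => (g x)%:E)^\+ x =
   lnn%:num%:E * \int[mu]_(x in setT) (fun x => (g x)%:E)^\+ x +
   lnn'%:num%:E * \int[nu]_(x in setT) (fun x => (g x)%:E)^\+ x)%E.
  rewrite -!ge0_integral_mscale //; try exact: measurable_funepos.
  exact: hp.
have e2 : (\int[mixp]_(x in setT) (fun x => (g x)%:E)^\- x =
   lnn%:num%:E * \int[mu]_(x in setT) (fun x => (g x)%:E)^\- x +
   lnn'%:num%:E * \int[nu]_(x in setT) (fun x => (g x)%:E)^\- x)%E.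
  rewrite -!ge0_integral_mscale //; try exact: measurable_funeneg.
  exact: hn.
rewrite e1 e2 /=.
have f1 := integrable_fin_num measurableT (integrable_funepos measurableT imu).
have f2 := integrable_fin_num measurableT (integrable_funeneg measurableT imu).
have f3 := integrable_fin_num measurableT (integrable_funepos measurableT inu).
have f4 := integrable_fin_num measurableT (integrable_funeneg measurableT inu).
rewrite -(fineK f1) -(fineK f2) -(fineK f3) -(fineK f4) /=.
ring.
Qed.

End Mix.

Section Cont.
Context (R : realType) (X : pseudoPMetricType R) (cX : compact [set: X]).

Lemma cont_meas (g : X -> R) : continuous g ->
  measurable_fun (setT : set (Borel X)) (g : Borel X -> R).
Proof.
move=> cg; apply: (measurability _ (RGenOpens.measurableE R)).
move=> _ [_ [a [b ->]] <-]; rewrite setTI.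
apply: sub_sigma_algebra; apply: (proj1 (continuousP g) cg).
exact: interval_open.
Qed.

Lemma cont_int (mu : probability (Borel X) R) (g : X -> R) : continuous g ->
  mu.-integrable setT (EFin \o (g : Borel X -> R)).
Proof.
move=> cg; apply: measurable_bounded_integrable => //.
- by apply: (le_lt_trans (probability_le1 mu measurableT)); rewrite ltry.
- exact: cont_meas.
- have : compact (g @` [set: X]).
    by apply: continuous_compact => //; exact: continuous_subspaceT.
  move=> /compact_bounded H. rewrite /bounded_near. rewrite /bounded_near in H. move: H => /= H.
  apply: (filterS _ H) => M HM x _.
  by apply: HM; exists x.
Qed.

End Cont.

Section Orth.
Variables (R : realFieldType) (d : nat) (K : 'rV[R]_d -> Prop) (v : 'rV[R]_d).
Hypothesis Kconv : forall x y (l : R), K x -> K y -> 0 <= l -> l <= 1 ->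
  K (l *: x + (1 - l) *: y).

Definition sgc (b : bool) (a c : R) := if b then a < c else c < a.

Definition Hk (k : nat) := forall s : {ffun 'I_d -> bool}, exists w, K w /\
  forall i : 'I_d, ((k <= i)%N -> w ord0 i = v ord0 i) /\
                   ((i < k)%N -> sgc (s i) (v ord0 i) (w ord0 i)).

Lemma sgc_conv b a p m l : sgc b a p -> sgc b a m -> 0 <= l -> l <= 1 ->
  sgc b a (l * p + (1 - l) * m).
Proof.
move=> h1 h2 h3 h4.
have e : l * p + (1 - l) * m = p + (1 - l) * (m - p) by ring.
have e' : l * p + (1 - l) * m = m + l * (p - m) by ring.
case: b h1 h2 => /= h1 h2; case: (lerP p m) => pm.
- rewrite e. have h : 0 <= (1 - l) * (m - p) by apply: mulr_ge0; lra.
  lra.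
- rewrite e'. have h : 0 <= l * (p - m) by apply: mulr_ge0; lra.
  lra.
- rewrite e'. have h : l * (p - m) <= 0 by apply: mulr_ge0_le0; lra.
  lra.
- rewrite e. have h : (1 - l) * (m - p) <= 0 by apply: mulr_ge0_le0; lra.
  lra.
Qed.

Lemma Hk_down k : Hk k.+1 -> Hk k.
Proof.
move=> H s; case: (ltnP k d) => kd; last first.
  have [w [Kw Hw]] := H s; exists w; split => // i; split.
    by move=> ki; have := ltn_ord i; lia.
  by move=> ik; apply: (proj2 (Hw i)); lia.
pose kk : 'I_d := Ordinal kd.
have [wp [Kp Hp]] := H [ffun i => if i == kk then true else s i].
have [wm [Km Hm]] := H [ffun i => if i == kk then false else s i].
have hkk : (kk < k.+1)%N by rewrite /= ltnSn.
have := proj2 (Hp kk) hkk; have := proj2 (Hm kk) hkk.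
rewrite !ffunE eqxx /sgc => hm hp.
set a := wp ord0 kk in hp *; set b := wm ord0 kk in hm *; set c := v ord0 kk in hp hm *.
pose l := (c - b) / (a - b).
have ab : 0 < a - b by lra.
have l0 : 0 <= l by rewrite /l divr_ge0 //; lra.
have l1 : l <= 1 by rewrite /l ler_pdivrMr //; lra.
exists (l *: wp + (1 - l) *: wm); split; first exact: Kconv.
move=> i; rewrite !mxE; split.
  move=> ki; have [->|ne] := eqVneq i kk.
    rewrite -/a -/b -/c /l; field; exact: lt0r_neq0.
  have ki' : (k.+1 <= i)%N.
    move: ne; rewrite -(inj_eq val_inj) /= => ne; lia.
  rewrite (proj1 (Hp i) ki') (proj1 (Hm i) ki'); ring.
move=> ik; have ne : i != kk by rewrite -(inj_eq val_inj) /=; lia.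
have ik' : (i < k.+1)%N by lia.
have := proj2 (Hp i) ik'; have := proj2 (Hm i) ik'.
rewrite !ffunE (negbTE ne) => h1 h2.
exact: sgc_conv.
Qed.

Lemma orthant : (forall s : {ffun 'I_d -> bool}, exists w, K w /\
  forall i : 'I_d, sgc (s i) (v ord0 i) (w ord0 i)) -> K v.
Proof.
move=> H.
suff : forall k, Hk k -> K v.
  move/(_ d); apply => s; have [w [Kw Hw]] := H s; exists w; split => // i; split => //.
  by move=> di; have := ltn_ord i; lia.
elim=> [|k IH] Hk0; last by apply: IH; apply: Hk_down.
have [w [Kw Hw]] := Hk0 [ffun => true].
suff -> : v = w by [].
by apply/rowP => i; rewrite (proj1 (Hw i)).
Qed.

End Orth.

Lemma fin_lb (R : realDomainType) (T : finType) (g : T -> R) :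
  (forall t, 0 < g t) -> exists2 r : R, 0 < r & forall t, r <= g t.
Proof.
move=> gp.
suff [r r0 hr] : exists2 r : R, 0 < r & forall t, t \in enum T -> r <= g t.
  by exists r => // t; apply: hr; rewrite mem_enum.
elim: (enum T) => [|a s [r r0 hr]]; first by exists 1.
exists (Num.min r (g a)); first by rewrite lt_min r0 gp.
move=> t; rewrite inE => /orP[/eqP ->|ts]; first by rewrite ge_min lexx orbT.
by rewrite ge_min hr.
Qed.

Section Main.
Context (R : realType) (X : pseudoPMetricType R) (cX : compact [set: X])
  (f : X -> X) (d : nat) (Phi Psi : 'I_d -> X -> R)
  (cPhi : forall i, continuous (Phi i)) (cPsi : forall i, continuous (Psi i)).

Lemma rball (x y : 'rV[R]_d) e : ball x e y -> forall i, `|x ord0 i - y ord0 i| < e.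
Proof. by move=> [_ H] i; have := H ord0 i. Qed.

Lemma rballI (x y : 'rV[R]_d) e : 0 < e ->
  (forall i, `|x ord0 i - y ord0 i| < e) -> ball x e y.
Proof. by move=> e0 H; split => // i j; rewrite (ord1 i); exact: H. Qed.

Lemma cont_sc (a : R) i : continuous (fun x => a * Psi i x).
Proof.
move=> x; apply: (@continuousM _ _ (fun=> a) (Psi i)); last exact: cPsi.
exact: cst_continuous.
Qed.

Lemma cont_h (a : R) i : continuous (fun x => Phi i x - a * Psi i x).
Proof.
move=> x; apply: (@continuousB _ _ _ (Phi i) (fun x => a * Psi i x)).
  exact: cPhi.
apply: (@continuousM _ _ (fun=> a) (Psi i)); last exact: cPsi.
exact: cst_continuous.
Qed.

Lemma lin (mu : probability (Borel X) R) (a : R) i :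
  integ mu (fun x => Phi i x - a * Psi i x) =
  integ mu (Phi i) - a * integ mu (Psi i).
Proof.
rewrite /integ RintegralB //; first last.
- exact: (cont_int cX mu (@cont_sc a i)).
- exact: cont_int.
by rewrite RintegralZl //; exact: cont_int.
Qed.

Lemma mix_inv (l : R) (l0 : 0 <= l) (l1 : l <= 1) (mu nu : probability (Borel X) R) :
  invariant_prob f mu -> invariant_prob f nu -> invariant_prob f (mixp l0 l1 mu nu).
Proof.
move=> h1 h2 A mA; rewrite !mixpE h1 // h2 //.
Qed.

Lemma Jconv (alpha : 'rV[R]_d) x y (l : R) :
  Jset f Phi Psi alpha x -> Jset f Phi Psi alpha y -> 0 <= l -> l <= 1 ->
  Jset f Phi Psi alpha (l *: x + (1 - l) *: y).
Proof.
move=> [mu [imu ->]] [nu [inu ->]] l0 l1.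
exists (mixp l0 l1 mu nu); split; first exact: mix_inv.
apply/rowP => i; rewrite !mxE /integ mix_integral //.
- exact: cont_meas (@cont_h (alpha ord0 i) i).
- exact: (cont_int cX mu (@cont_h (alpha ord0 i) i)).
- exact: (cont_int cX nu (@cont_h (alpha ord0 i) i)).



Qed.

Hypothesis hQ : condQ f Phi Psi.

Lemma dir1 alpha : I0set f Phi Psi alpha -> interior (Iset f Phi Psi) alpha.
Proof.
move=> H; have /nbhs_ballP[r r0 hr] := H; have {}r0 : 0 < r := r0.
pose w (s : {ffun 'I_d -> bool}) : 'rV[R]_d := \row_(i < d) (if s i then r / 2 else - (r / 2)).
have hw : forall s, exists mu, invariant_prob f mu /\
    w s = \row_(i < d) integ mu (fun x => Phi i x - alpha ord0 i * Psi i x).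
  move=> s; apply: hr; apply: rballI => // i; rewrite !mxE sub0r normrN.
  by case: (s i); rewrite ?normrN ltr_norml; apply/andP; split; lra.
have [mus hmus] := choice hw.
pose g (p : {ffun 'I_d -> bool} * 'I_d) := (r / 2) / (1 + `|integ (mus p.1) (Psi p.2)|).
have [e e0 he] : exists2 e : R, 0 < e & forall p, e <= g p.
  apply: fin_lb; case=> s i; rewrite /g /=; apply: divr_gt0; first lra.
  by have := normr_ge0 (integ (mus s) (Psi i)); lra.
apply/nbhs_ballP; exists e => // beta hb.
have hb' := rball hb.
have J0 : Jset f Phi Psi beta 0.
  apply: (orthant (@Jconv beta)) => s.
  exists (\row_(i < d) integ (mus s) (fun x => Phi i x - beta ord0 i * Psi i x)).
  split; first by exists (mus s); split => //; exact: (hmus s).1.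
  move=> i; rewrite !mxE lin.
  have := congr1 (fun m : 'rV[R]_d => m ord0 i) (hmus s).2; rewrite !mxE lin => ew.
  have he' := he (s, i); rewrite /g /= in he'.
  have hbi := hb' i.
  move: ew he' hbi.
  set A := integ (mus s) (Phi i); set B := integ (mus s) (Psi i).
  set b := beta ord0 i; set c := alpha ord0 i => ew he' hbi.
  have q0 := normr_ge0 B.
  have hg : r / 2 / (1 + `|B|) * (1 + `|B|) = r / 2.
    have hB1 : 0 < 1 + `|B| by lra.
    by field; rewrite gt_eqF.
  have key : `|(b - c) * B| < r / 2.
    rewrite normrM distrC.
    have h1 : `|c - b| * `|B| <= e * `|B| by apply: ler_wpM2r => //; exact: ltW.
    have h2 : e * `|B| <= r / 2 / (1 + `|B|) * `|B| by apply: ler_wpM2r.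
    have h3 : 0 < r / 2 / (1 + `|B|) by apply: divr_gt0; lra.
    nra.
  rewrite ltr_norml in key; move/andP: key => [k1 k2].
  by case: (s i) ew => /= ew; rewrite /sgc /=; nra.
have [mu [imu e0row]] := J0.
exists mu; split => // i.
have := congr1 (fun m : 'rV[R]_d => m ord0 i) e0row; rewrite !mxE lin => e1.
have [hB hA] := hQ imu i.
move: e1 hB hA; set A := integ mu (Phi i); set B := integ mu (Psi i) => e1 hB hA.
have Bn0 : B != 0.
  apply/negP => /eqP B0; move: e1; rewrite B0 mulr0 subr0 => /esym A0.
  by have := hA A0; rewrite B0 ltxx.
split => //.
have -> : A = beta ord0 i * B by lra.
by rewrite mulfK.
Qed.

Lemma dir2 alpha : interior (Iset f Phi Psi) alpha -> I0set f Phi Psi alpha.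
Proof.
move=> H; have /nbhs_ballP[r r0 hr] := H; have {}r0 : 0 < r := r0.
pose bet (s : {ffun 'I_d -> bool}) : 'rV[R]_d :=
  \row_(i < d) (alpha ord0 i + (if s i then r / 2 else - (r / 2))).
have hb : forall s, exists mu, invariant_prob f mu /\ forall i : 'I_d,
    integ mu (Psi i) != 0 /\ bet s ord0 i = integ mu (Phi i) / integ mu (Psi i).
  move=> s; apply: hr; apply: rballI => // i; rewrite !mxE.
  by case: (s i); rewrite ltr_norml; apply/andP; split; lra.
have [mus hmus] := choice hb.
pose g (p : {ffun 'I_d -> bool} * 'I_d) := r / 2 * integ (mus p.1) (Psi p.2).
have [e e0 he] : exists2 e : R, 0 < e & forall p, e <= g p.
  apply: fin_lb; case=> s i; rewrite /g /=; apply: mulr_gt0; first lra.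
  have [hB _] := hQ (hmus s).1 i; have [Bn0 _] := (hmus s).2 i.
  by rewrite lt_def Bn0 hB.
apply/nbhs_ballP; exists e => // v hv.
have hv' := rball hv.
apply: (orthant (@Jconv alpha)) => s.
exists (\row_(i < d) integ (mus s) (fun x => Phi i x - alpha ord0 i * Psi i x)).
split; first by exists (mus s); split => //; exact: (hmus s).1.
move=> i; rewrite !mxE lin.
have [Bn0 eb] := (hmus s).2 i; move: eb; rewrite !mxE => eb.
have he' := he (s, i); rewrite /g /= in he'.
have hvi := hv' i; rewrite !mxE sub0r normrN ltr_norml in hvi.
move/andP: hvi => [hv1 hv2].
move: eb he' Bn0 hv1 hv2.
set A := integ (mus s) (Phi i); set B := integ (mus s) (Psi i).
set c := alpha ord0 i; set t := v ord0 i => eb he' Bn0 hv1 hv2.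
have eA : A = (c + (if s i then r / 2 else - (r / 2))) * B.
  by rewrite eb mulfVK.
rewrite eA /sgc; case: (s i) he' => /= he'; nra.
Qed.

Lemma main_eq : I0set f Phi Psi = interior (Iset f Phi Psi).
Proof. by apply/seteqP; split => alpha; [exact: dir1 | exact: dir2]. Qed.

End Main.

Theorem lemma4p7 (R : realType) (X : pseudoPMetricType R)
  (hX : hausdorff_space X) (cX : compact [set: X])
  (f : X -> X) (cf : continuous f)
  (hf : (htop f < +oo)%E)
  (d : nat) (Phi Psi : 'I_d -> X -> R)
  (cPhi : forall i, continuous (Phi i)) (cPsi : forall i, continuous (Psi i))
  (hQ : condQ f Phi Psi) :
  I0set f Phi Psi = interior (Iset f Phi Psi).
Proof. exact: (main_eq cX cPhi cPsi hQ). Qed.
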